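(* Let $J=\{j_1<\dots<j_k\}\subseteq[n]$ with complement $[n]\setminus J=\{h_1<\dots<h_{n-k}\}$, and let $\psi:\mathbb{R}^n\to\mathbb{R}^n$ be the coordinate permutation $\psi(x_1,\dots,x_n)=(x_{h_1},\dots,x_{h_{n-k}},x_{j_1},\dots,x_{j_k})$. Then $\psi$ maps the bridge polytope $\mathrm{Br}_J$ isomorphically onto the Bruhat interval polytope $\mathsf{Q}_{e,\pi(J)^{-1}}$. More precisely, $\psi$ sends the vertex $(z(1),\dots,z(n))$, $z\in S_J$, to the point of the permutation $z\circ\pi(J)^{-1}$, and $z\mapsto z\circ\pi(J)^{-1}$ is a bijection from $S_J$ onto the strong Bruhat interval $[e,\pi(J)^{-1}]=\{w\in S_n: e\le w\le \pi(J)^{-1}\}$; in particular the vertices $\pi(J)$ and $e$ of $\mathrm{Br}_J$ go to $e$ and $\pi(J)^{-1}$ respectively.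
   Context: For $J\subseteq[n]$, $S_J=\{\pi\in S_n:\ \pi(j)\ge j \text{ for } j\in J,\ \pi(j)\le j \text{ for } j\notin J\}$ and $\mathrm{Br}_J=\operatorname{conv}\{(\pi(1),\dots,\pi(n)):\pi\in S_J\}\subset\mathbb{R}^n$. For $J=\{j_1<\dots<j_k\}$ with complement $\{h_1<\dots<h_{n-k}\}$, $\pi(J)\in S_n$ is the permutation with $\pi(J)(h_i)=i$ for $1\le i\le n-k$ and $\pi(J)(j_i)=n-k+i$ for $1\le i\le k$; thus $\pi(J)^{-1}=(h_1,\dots,h_{n-k},j_1,\dots,j_k)$ in one-line notation. For $u\le v$ in the strong Bruhat order on $S_n$, the Bruhat interval polytope is $\mathsf{Q}_{u,v}=\operatorname{conv}\{(z(1),\dots,z(n)): z\in S_n,\ u\le z\le v\}$, where $\le$ is the strong Bruhat order. *)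

(* Defs.v *)
From HB Require Import structures.
From mathcomp Require Import all_boot all_order all_algebra all_fingroup.
Set Implicit Arguments. Unset Strict Implicit. Unset Printing Implicit Defensive.
Import Order.TTheory GRing.Theory Num.Theory.

(* Conventions: [n] = {1..n} is encoded as 'I_n (0-based);  a permutation
   z : {perm 'I_n} represents the permutation i+1 |-> (z i)+1 of [n].
   MathComp composition: (s * t) x = t (s x), so  z o w  is  w * z. *)

Section Defs.
Variable n : nat.

Definition SJ (J : {set 'I_n}) : {set {perm 'I_n}} :=
  [set z : {perm 'I_n} | [forall j, if j \in J then j <= z j else z j <= j]].

(* one-line notation of pi(J)^{-1} = (h_1,...,h_{n-k}, j_1,...,j_k) *)
Definition oneline (J : {set 'I_n}) : seq 'I_n :=
  [seq i <- enum 'I_n | i \notin J] ++ [seq i <- enum 'I_n | i \in J].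

Lemma size_oneline J : size (oneline J) = n.
Proof.
rewrite size_cat !size_filter addnC.
have -> : count (fun i => i \notin J) (enum 'I_n) = count (predC (mem J)) (enum 'I_n) by [].
by rewrite count_predC size_enum_ord.
Qed.

Lemma mem_oneline J x : x \in oneline J.
Proof. rewrite mem_cat; case: (boolP (x \in J)) => h; apply/orP; [right|left]; rewrite mem_filter h /= mem_enum //. Qed.

Lemma index_oneline_lt J x : index x (oneline J) < n.
Proof. by rewrite -{2}(size_oneline J) index_mem mem_oneline. Qed.

Definition piJ_fun (J : {set 'I_n}) (x : 'I_n) : 'I_n :=
  Ordinal (index_oneline_lt J x).

Lemma piJ_fun_inj J : injective (piJ_fun J).
Proof.
move=> x y /(congr1 val) /= H.
exact: (index_inj x (mem_oneline J x) (mem_oneline J y) H).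
Qed.

Definition piJ (J : {set 'I_n}) : {perm 'I_n} := perm (@piJ_fun_inj J).

Definition ninv (w : {perm 'I_n}) : nat :=
  #|[set p : 'I_n * 'I_n | (p.1 < p.2) && (w p.2 < w p.1)]|.

Definition bruhat_step : rel {perm 'I_n} := fun u v =>
  [exists i : 'I_n, exists j : 'I_n,
     [&& i != j, v == (tperm i j * u)%g & ninv u < ninv v]].

Definition bruhat (u v : {perm 'I_n}) : bool := connect bruhat_step u v.

Local Open Scope ring_scope.
Variable R : realFieldType.

Definition pt (z : {perm 'I_n}) : 'rV[R]_n := \row_i ((z i).+1)%:R%R.

Definition conv_pts (A : {set {perm 'I_n}}) (x : 'rV[R]_n) : Prop :=
  exists lam : {perm 'I_n} -> R,
    [/\ forall z, (0 <= lam z)%R, forall z, z \notin A -> lam z = 0,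
        (\sum_z lam z = 1)%R & x = (\sum_z lam z *: pt z)%R].

Definition Br (J : {set 'I_n}) : 'rV[R]_n -> Prop := conv_pts (SJ J).

Definition bruhat_interval (u v : {perm 'I_n}) : {set {perm 'I_n}} :=
  [set z | bruhat u z && bruhat z v].

Definition QBr (u v : {perm 'I_n}) : 'rV[R]_n -> Prop :=
  conv_pts (bruhat_interval u v).

Definition psi (J : {set 'I_n}) (x : 'rV[R]_n) : 'rV[R]_n :=
  \row_i x ord0 (nth i (oneline J) i).

End Defs.

(* Main.v *)
Require Import Defs.
From HB Require Import structures.
From mathcomp Require Import all_boot all_order all_algebra all_fingroup.
From mathcomp Require Import zify.
Import Order.TTheory GRing.Theory Num.Theory.
Set Implicit Arguments. Unset Strict Implicit. Unset Printing Implicit Defensive.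

Section Comb.
Variable n : nat.
Local Open Scope group_scope.

Definition invs (v : {perm 'I_n}) : {set 'I_n * 'I_n} :=
  [set p : 'I_n * 'I_n | (p.1 < p.2)%N && (v p.2 < v p.1)%N].

Lemma ninvE v : ninv v = #|invs v|. Proof. by []. Qed.

Lemma ninv_swap (v : {perm 'I_n}) (a b : 'I_n) :
  (a < b)%N -> (v a < v b)%N -> (ninv v < ninv (tperm a b * v))%N.
Proof.
move=> ab vab.
set t := tperm a b.
pose phi (p : 'I_n * 'I_n) := if (t p.1 < t p.2)%N then (t p.1, t p.2) else p.
have phi_inj : {in invs v &, injective phi}.
  move=> [p q] [p' q']; rewrite !inE /= => /andP[pq _] /andP[pq' _].
  rewrite /phi /=.
  case: ifP => h1; case: ifP => h2 [E1 E2].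
  - by move: E1 E2 => /perm_inj -> /perm_inj ->.
  - by move: h2; rewrite -E1 -E2 /t !tpermK pq.
  - by move: h1; rewrite E1 E2 /t !tpermK pq'.
  - by rewrite E1 E2.
rewrite !ninvE -(card_in_imset phi_inj); apply: proper_card.
apply/properP; split.
  apply/subsetP => _ /imsetP[[p q] Hpq ->]; move: Hpq; rewrite !inE /= => /andP[pq vqp].
  rewrite /phi /=; case: ifP => h; rewrite /= !permM.
    by rewrite h /= !tpermK.
  rewrite pq /=.
  move: h pq vqp; rewrite /t.
  case: (tpermP a b p) => [->|->|/eqP pa /eqP pb]; case: (tpermP a b q) => [->|->|/eqP qa /eqP qb] //=.
all: try (move=> h1 h2 h3; lia).
exists (pair a b).
  by rewrite inE /= ab !permM tpermL tpermR vab.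
apply/imsetP => -[[p q]]; rewrite inE /= => /andP[pq vqp].
rewrite /phi /=; case: ifP => h [E1 E2].
  by move: pq; rewrite -(tpermK a b p) -(tpermK a b q) -/t -E1 -E2 /t tpermL tpermR => ba; lia.
by move: vqp; rewrite -E1 -E2 ltnNge ltnW.
Qed.

Lemma min_moved (s : {perm 'I_n}) : s != 1 ->
  exists x, [/\ s x != x, (x < s x)%N & forall t, s t != t -> (x <= t)%N].
Proof.
move=> s1.
have [t0 Ht0] : exists t0, s t0 != t0.
  apply/existsP; apply: contraR s1 => /existsPn H; apply/eqP/permP => t.
  by rewrite perm1; apply/eqP; move: (H t); rewrite negbK.
case: (@arg_minnP _ t0 (fun t => s t != t) (fun t : 'I_n => nat_of_ord t) Ht0) => x Hx Hmin.
exists x; split => //.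
have Hsx : s (s x) != s x by apply: contra Hx => /eqP /perm_inj ->.
have := Hmin _ Hsx; rewrite leq_eqVlt => /orP[/eqP E|//].
by move: Hx; rewrite -(val_inj E) eqxx.
Qed.

Lemma tpermKm (x y : 'I_n) (v : {perm 'I_n}) : tperm x y * (tperm x y * v) = v.
Proof. by rewrite mulgA tperm2 mul1g. Qed.

Lemma bruhat1 (v : {perm 'I_n}) : bruhat 1 v.
Proof.
have [k] := ubnP (ninv v); elim: k v => // k IH v lt.
case: (eqVneq v 1) => [->|v1]; first exact: connect0.
have [x [Hx xlt Hmin]] := min_moved v1.
set y := v^-1 x.
have vy : v y = x by rewrite /y permKV.
have yx : y != x by apply: contra Hx => /eqP E; rewrite -{1}E vy.
have xy : (x < y)%N.
  have := Hmin y; rewrite vy eq_sym => /(_ yx).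
  by rewrite leq_eqVlt => /orP[/eqP E|//]; move: yx; rewrite (val_inj E) eqxx.
set u := tperm x y * v.
have ux : u x = v y by rewrite /u permM tpermL.
have uy : u y = v x by rewrite /u permM tpermR.
have Hl : (ninv u < ninv v)%N.
  have := ninv_swap xy (_ : (u x < u y)%N); rewrite /u tpermKm; apply.
  by rewrite ux uy vy.
apply: connect_trans (IH u _) _; first by apply: leq_trans Hl _; rewrite -ltnS.
apply: connect1; apply/existsP; exists x; apply/existsP; exists y.
by rewrite eq_sym yx /u tpermKm eqxx Hl.
Qed.
End Comb.

Section Idx.
Variable n : nat.
Variable J : {set 'I_n}.
Local Open Scope group_scope.

Lemma piJE x : nat_of_ord (piJ J x) = index x (oneline J).
Proof. by rewrite permE. Qed.

Lemma srt (P : pred 'I_n) :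
  sorted (fun x y : 'I_n => (x < y)%N) [seq i <- enum 'I_n | P i].
Proof.
apply: sorted_filter; first by move=> ???; apply: ltn_trans.
by have := iota_ltn_sorted 0 n; rewrite -val_enum_ord sorted_map.
Qed.

Lemma memF (P : pred 'I_n) x : (x \in [seq i <- enum 'I_n | P i]) = P x.
Proof. by rewrite mem_filter mem_enum andbT. Qed.

Lemma idx_cases x y : (piJ J x < piJ J y)%N ->
  (x \in J -> y \in J) /\ ((x \in J) = (y \in J) -> (x < y)%N).
Proof.
rewrite !piJE /oneline !index_cat !memF.
have tr : transitive (fun x y : 'I_n => (x < y)%N) by move=> ???; apply: ltn_trans.
case xJ: (x \in J); case yJ: (y \in J) => //= H.
- split=> // _; move: H; rewrite ltn_add2l.
  apply: (sorted_ltn_index tr (srt (fun i => i \in J))); by rewrite memF.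
- exfalso; move: H; rewrite ltnNge => /negP; apply.
  apply: leq_trans (leq_addr _ _); apply: ltnW.
  by rewrite index_mem memF yJ.
- split=> // _; move: H.
  apply: (sorted_ltn_index tr (srt (fun i => i \notin J))); by rewrite memF ?xJ ?yJ.
Qed.

Lemma idx_lt x y :
  (x \notin J) && (y \in J) || ((x \in J) == (y \in J)) && (x < y)%N ->
  (piJ J x < piJ J y)%N.
Proof.
move=> H; case: (ltngtP (piJ J x) (piJ J y)) => // [yx|/val_inj/perm_inj E].
  have [H1 H2] := idx_cases yx.
  move: H; case xJ: (x \in J); case yJ: (y \in J) => //=.
  - by move=> xy; move: (H2 (etrans yJ (esym xJ))); rewrite ltnNge ltnW.
  - by move: (H1 yJ); rewrite xJ.
  - by move=> xy; move: (H2 (etrans yJ (esym xJ))); rewrite ltnNge ltnW.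
by move: H; rewrite E ltnn eqxx andbF orbF; case: (y \in J).
Qed.

Lemma SJP (z : {perm 'I_n}) :
  reflect (forall j, if j \in J then (j <= z j)%N else (z j <= j)%N) (z \in SJ J).
Proof. by rewrite inE; apply: forallP. Qed.

Lemma step_back_lt (u : {perm 'I_n}) (i j : 'I_n) : (i < j)%N ->
  (ninv u < ninv (tperm i j * u))%N -> piJ J * (tperm i j * u) \in SJ J ->
  piJ J * u \in SJ J.
Proof.
move=> ij lt /SJP Hz.
set u' := tperm i j * u in lt Hz.
have u'i : u' i = u j by rewrite /u' permM tpermL.
have u'j : u' j = u i by rewrite /u' permM tpermR.
have uij : (u i < u j)%N.
  case: (ltngtP (u i) (u j)) => // [ji|/val_inj/perm_inj E].
    have := ninv_swap ij (_ : (u' i < u' j)%N); rewrite /u' tpermKm.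
    by move=> /(_ _) H; move: lt; rewrite ltnNge ltnW // H // u'i u'j.
  by move: ij; rewrite E ltnn.
set x := (piJ J)^-1 i; set y := (piJ J)^-1 j.
have px : piJ J x = i by rewrite /x permKV.
have py : piJ J y = j by rewrite /y permKV.
have [H1 H2] : (x \in J -> y \in J) /\ ((x \in J) = (y \in J) -> (x < y)%N).
  by apply: idx_cases; rewrite px py.
have zx : (piJ J * u') x = u j by rewrite permM px u'i.
have zy : (piJ J * u') y = u i by rewrite permM py u'j.
have Hx := Hz x; have Hy := Hz y; rewrite zx in Hx; rewrite zy in Hy.
apply/SJP => k; rewrite permM.
case: (eqVneq k x) => [->|kx].
  rewrite px; case xJ: (x \in J) Hx => Hx.
    move: Hy; rewrite (H1 xJ) => Hy.
    by apply: leq_trans (ltnW (H2 _)) Hy; rewrite xJ (H1 xJ).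
  by apply: leq_trans (ltnW uij) Hx.
case: (eqVneq k y) => [->|ky].
  rewrite py; case yJ: (y \in J) Hy => Hy.
    by apply: leq_trans Hy (ltnW uij).
  have xJ : (x \in J) = false by apply/negP => /H1; rewrite yJ.
  move: Hx; rewrite xJ => Hx.
  by apply: leq_trans Hx (ltnW (H2 _)); rewrite xJ yJ.
have := Hz k; rewrite permM /u' permM tpermD //.
  by apply: contra kx => /eqP E; apply/eqP; rewrite -(permK (piJ J) k) -E.
by apply: contra ky => /eqP E; apply/eqP; rewrite -(permK (piJ J) k) -E.
Qed.

Lemma step_back (u u' : {perm 'I_n}) :
  bruhat_step u u' -> piJ J * u' \in SJ J -> piJ J * u \in SJ J.
Proof.
move=> /existsP[i] /existsP[j] /and3P[ij /eqP -> lt].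
case: (ltngtP i j) => [lij|lji|/val_inj E]; last by rewrite E eqxx in ij.
  exact: step_back_lt.
rewrite tpermC; apply: step_back_lt => //; by rewrite tpermC.
Qed.

Lemma interval_SJ (v : {perm 'I_n}) : bruhat v (piJ J)^-1 -> piJ J * v \in SJ J.
Proof.
move=> /connectP[s]; elim: s v => [|u' s IH] v /=.
  move=> _ <-; rewrite mulgV; apply/SJP => j; case: (j \in J); by rewrite perm1.
by move=> /andP[st pth] lst; apply: step_back st (IH _ pth lst).
Qed.

Lemma ninv_le (v : {perm 'I_n}) : (ninv v <= n * n)%N.
Proof. by rewrite ninvE; apply: leq_trans (max_card _) _; rewrite card_prod card_ord. Qed.

Lemma SJ_interval (z : {perm 'I_n}) : z \in SJ J ->
  bruhat ((piJ J)^-1 * z) (piJ J)^-1.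
Proof.
have [k] := ubnP (n * n - ninv ((piJ J)^-1 * z)); elim: k z => // k IH z lt zS.
case: (eqVneq z 1) => [->|z1]; first by rewrite mulg1; apply: connect0.
have [x [Hx xlt Hmin]] := min_moved z1.
have Hz := SJP _ zS.
have xJ : x \in J.
  by move: (Hz x); case: (x \in J) => // H; move: xlt; rewrite ltnNge H.
set c := z x.
set d := z c.
have cx : c != x by [].
have dc : d != c by apply: contra cx => /eqP /perm_inj ->.
have dmov : z d != d by apply: contra dc => /eqP E; apply/eqP; apply: (@perm_inj _ z); rewrite E.
have xd : (x <= d)%N := Hmin d dmov.
set z' := tperm x c * z.
have z'S : z' \in SJ J.
  apply/SJP => j; rewrite permM; case: tpermP => [->|->|/eqP jx /eqP jc].
  - by rewrite xJ.
  - by rewrite -/c; case: (c \in J).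
  - exact: Hz.
set w := (piJ J)^-1.
have pw : forall a, w (piJ J a) = a by move=> a; rewrite /w permK.
set v := w * z.
have vx : v (piJ J x) = c by rewrite /v permM pw.
have vc : v (piJ J c) = d by rewrite /v permM pw.
have Eq : w * z' = tperm (piJ J x) (piJ J c) * v.
  have T : tperm x c = (tperm (piJ J x) (piJ J c)) ^ w by rewrite tpermJ !pw.
  by rewrite /z' /v T conjgE mulgA mulKVg mulgA.
have Hc := Hz c; rewrite -/d in Hc.
have Hl : (ninv v < ninv (w * z'))%N.
  rewrite Eq; case cJ: (c \in J) Hc => Hc.
    apply: ninv_swap; first by apply: idx_lt; rewrite xJ cJ /= xlt.
    by rewrite vx vc ltn_neqAle eq_sym dc Hc.
  rewrite tpermC; apply: ninv_swap; first by apply: idx_lt; rewrite xJ cJ.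
  by rewrite vx vc ltn_neqAle dc Hc.
apply: connect_trans (connect1 _) (IH z' _ z'S).
  apply/existsP; exists (piJ J x); apply/existsP; exists (piJ J c).
  rewrite Hl Eq eqxx andbT /=.
  by rewrite andbT; apply: contra cx => /eqP /perm_inj ->.
have := ninv_le (w * z'); rewrite -/w -/v in lt *; lia.
Qed.
End Idx.

Section Geo.
Variable R : realFieldType.
Variable n : nat.
Variable J : {set 'I_n}.
Local Open Scope ring_scope.

Lemma nthE (i : 'I_n) : nth i (oneline J) i = ((piJ J)^-1)%g i.
Proof.
have E : index (((piJ J)^-1)%g i) (oneline J) = i by rewrite -piJE permKV.
by rewrite -{1}E nth_index // mem_oneline.
Qed.

Lemma psiE (x : 'rV[R]_n) : psi J x = \row_i x ord0 (((piJ J)^-1)%g i).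
Proof. by apply/rowP => i; rewrite !mxE nthE. Qed.

Lemma psi_pt (z : {perm 'I_n}) : psi J (pt R z) = pt R ((piJ J)^-1 * z)%g.
Proof. by apply/rowP => i; rewrite psiE !mxE permM. Qed.

Lemma psi_sum (lam : {perm 'I_n} -> R) (X : {perm 'I_n} -> 'rV[R]_n) :
  psi J (\sum_z lam z *: X z) = \sum_z lam z *: psi J (X z).
Proof.
apply/rowP => i; rewrite psiE !mxE !summxE; apply: eq_bigr => z _.
by rewrite !mxE nthE.
Qed.

Lemma psi_inj : injective (@psi n R J).
Proof.
move=> x y E; apply/rowP => j.
have := congr1 (fun m : 'rV[R]_n => m ord0 (piJ J j)) E.
by rewrite /= !psiE !mxE permK.
Qed.
End Geo.

Theorem lemma4p2 (R : realFieldType) (n : nat) (J : {set 'I_n}) :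
  [/\ injective (@psi n R J),
      (forall y : 'rV[R]_n,
         @QBr n R 1%g (piJ J)^-1%g y <-> exists x, @Br n R J x /\ y = psi J x),
      (forall z : {perm 'I_n}, z \in SJ J ->
         psi J (@pt n R z) = @pt n R ((piJ J)^-1 * z)%g),
      {in SJ J &, injective (fun z : {perm 'I_n} => ((piJ J)^-1 * z)%g)} &
      [set ((piJ J)^-1 * z)%g | z in SJ J] = bruhat_interval 1%g (piJ J)^-1%g]
  /\
  [/\ piJ J \in SJ J, (1%g : {perm 'I_n}) \in SJ J,
      psi J (@pt n R (piJ J)) = @pt n R 1%g &
      psi J (@pt n R 1%g) = @pt n R (piJ J)^-1%g].
Proof.
set w := ((piJ J)^-1)%g.
have memI : forall v, (v \in bruhat_interval 1%g w) = ((piJ J * v)%g \in SJ J).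
  move=> v; rewrite inE bruhat1 /=; apply/idP/idP; first exact: interval_SJ.
  by move=> /SJ_interval; rewrite /w mulKg.
have memI' : forall z, ((w * z)%g \in bruhat_interval 1%g w) = (z \in SJ J).
  by move=> z; rewrite memI /w mulKVg.
have oneS : (1%g : {perm 'I_n}) \in SJ J.
  by apply/SJP => j; rewrite perm1; case: (j \in J).
split; last split.
- split.
  + exact: psi_inj.
  + move=> y; split.
      move=> [lam' [H0 Hs H1 ->]].
      exists (\sum_z lam' (w * z)%g *: pt R z)%R; split.
        exists (fun z => lam' (w * z)%g); split => //.
          by move=> z zS; apply: Hs; rewrite memI'.
        by rewrite -H1 [RHS](reindex_inj (mulgI w)).
      rewrite psi_sum (reindex_inj (mulgI w)); apply: eq_bigr => z _.
      by rewrite psi_pt.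
    move=> [x [[lam [H0 Hs H1 ->]] ->]].
    exists (fun v => lam (piJ J * v)%g); split => //.
        by move=> v vI; apply: Hs; rewrite -memI.
      by rewrite -H1 (reindex_inj (mulgI w)); apply: eq_bigr => z _; rewrite /w mulKVg.
    rewrite psi_sum [RHS](reindex_inj (mulgI w)); apply: eq_bigr => z _.
    by rewrite psi_pt /w mulKVg.
  + by move=> z _; apply: psi_pt.
  + by move=> z1 z2 _ _; apply: mulgI.
  + apply/setP => v; apply/imsetP/idP.
      by move=> [z zS ->]; rewrite memI'.
    by move=> vI; exists (piJ J * v)%g; [rewrite -memI | rewrite /w mulKg].
- by have := memI 1%g; rewrite mulg1 => <-; rewrite inE !bruhat1.
- exact: oneS.
- by rewrite psi_pt mulVg.
- by rewrite psi_pt mulg1.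
Qed.
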